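(* Let $Q=\sum_{i\in[m]}q_i\mathrm B(\sigma_i)\in\mathbb B_m$ with $0\le\sigma_1<\cdots<\sigma_m\le1/2$, and let $W=\sum_{j\in[n]}p_j\mathrm B(\varepsilon_j)\in\mathbb B_n$ be a $2n$-P-degradation of $Q$ with all $p_j>0$ and $\sigma_1\le\varepsilon_1\le\varepsilon_2\le\cdots\le\varepsilon_n\le\sigma_m$. Let $(k_{i,j})_{m\times n}$ be a 1-matrix of pattern $(q_1,\dots,q_m;p_1,\dots,p_n)$ with $\sum_{i\in[m]}k_{i,j}\sigma_i=p_j\varepsilon_j$ for all $j\in[n]$. For a nonnegative $m\times n$ matrix $(\kappa_{i,j})$ with column sums $\pi_j=\sum_i\kappa_{i,j}$, write $W[\kappa]=\sum_{j:\pi_j>0}\pi_j\mathrm B\big(\pi_j^{-1}\sum_i\kappa_{i,j}\sigma_i\big)$. 1. If $k_{i',j'}\neq0$ for some $i'\in[m]$, $j'\in[n-1]$ with $\sigma_{i'}\ge\varepsilon_{j'+1}$, let $k'$ be obtained from $k$ by setting $k'_{i',j'}=0$, $k'_{i',j'+1}=k_{i',j'+1}+k_{i',j'}$ and leaving all other entries unchanged. Then $W'=W[k']$ satisfies $W\preccurlyeq_{\mathrm P}W'\preccurlyeq_{\mathrm P}Q$. 2. If $k_{i'',j''}\neq0$ for some $i''\in[m]$, $2\le j''\le n$ with $\sigma_{i''}\le\varepsilon_{j''-1}$, let $k''$ be obtained from $k$ by setting $k''_{i'',j''}=0$, $k''_{i'',j''-1}=k_{i'',j''-1}+k_{i'',j''}$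 and leaving all other entries unchanged. Then $W''=W[k'']$ satisfies $W\preccurlyeq_{\mathrm P}W''\preccurlyeq_{\mathrm P}Q$. 3. If $k_{i_*,j^*}k_{i^*,j_*}\neq0$ for some $i_*,i^*\in[m]$, $j_*,j^*\in[n]$ with $\varepsilon_{j_*}\le\sigma_{i_*}<\sigma_{i^*}\le\varepsilon_{j^*}$, let $\delta=\min\{k_{i_*,j^*},k_{i^*,j_*}\}$ and let $k^*$ be obtained from $k$ by subtracting $\delta$ from the entries $(i_*,j^* )$ and $(i^*,j_* )$, adding $\delta$ to the entries $(i_*,j_* )$ and $(i^*,j^* )$, and leaving all other entries unchanged. Then $W^*=W[k^*]$ satisfies $W\preccurlyeq_{\mathrm P}W^*\preccurlyeq_{\mathrm P}Q$.
   Context: A BIDMC $W$ has input uniform on $\{0,1\}$, discrete output alphabet $\mathcal Y$ and transition probabilities $\Pr(y\mid x)$; its LR-profile is $P_W(\varepsilon)=\Pr\big(\mathcal L_W(y)=\varepsilon/(1-\varepsilon)\big)$ with $\mathcal L_W(\hat y)=\Pr(y=\hat y\mid x=0)/\Pr(y=\hat y\mid x=1)$, and $W\cong W'$ if LR-profiles coincide; channel identities are up to $\cong$. $W'\preccurlyeq W$ if there is a channel $T$ from the output alphabet of $W$ to that of $W'$ with $\Pr(y'\mid x'=a)=\sum_{y}\Pr(y\mid x=a)T(y'\mid y)$. $\mathrm B(\varepsilon)$ is the BSC with crossover probability $\varepsilon$; $\sum_iq_iW_i$ (with $(q_i)$ a probability vector) denotes the random switching channel (use $W_i$ with probability $q_i$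 independently of the input and output the index $i$ along with the output). $\mathbb B_n$ is the set of BIDMCs equivalent to $\sum_{i\in[n]}p_i\mathrm B(\varepsilon_i)$ for a probability vector $(p_i)$ and $\varepsilon_i\in[0,1]$. $P_\epsilon(W)=\frac12\sum_{y}\min\{\Pr(y\mid x=0),\Pr(y\mid x=1)\}$. For a symmetric BIDMC $Q$ and $n\ge1$, $W$ is a $2n$-P-degradation of $Q$, written $W\preccurlyeq_{\mathrm P}Q$, if $W\in\mathbb B_n$, $W\preccurlyeq Q$ and $P_\epsilon(W)=\min\{P_\epsilon(W'):W'\in\mathbb B_n,\ W'\preccurlyeq Q\}$. A 1-matrix of pattern $(q_1,\dots,q_m;p_1,\dots,p_n)$ is a matrix $(k_{i,j})_{m\times n}$ with $k_{i,j}\ge0$, $\sum_{j}k_{i,j}=q_i$ for all $i$ and $\sum_{i}k_{i,j}=p_j$ for all $j$. *)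

(* Defs.v *)
From HB Require Import structures.
From mathcomp Require Import all_boot all_order all_algebra.
From mathcomp Require Import reals.
Set Implicit Arguments. Unset Strict Implicit. Unset Printing Implicit Defensive.
Import Order.TTheory GRing.Theory Num.Theory.
Local Open Scope ring_scope.

(* A binary-input channel: input false = 0, true = 1; finite output alphabet. *)
Record channel (R : Type) := Channel { out : finType; tp : bool -> out -> R }.
Arguments Channel {R} out tp.
Arguments tp {R} c _ _.
Arguments out {R} c.

Section Defs.
Variable R : realType.

Definition valid (W : channel R) : Prop :=
  (forall x y, 0 <= tp W x y) /\ (forall x, \sum_y tp W x y = 1).

(* LR-profile: P_W(e) = Pr(L_W(y) = e/(1-e)) with uniform input, where
   L_W(y) = Pr(y|0)/Pr(y|1); written without division. *)
Definition lr_profile (W : channel R) (e : R) : R :=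
  \sum_(y | tp W false y * (1 - e) == e * tp W true y)
     (tp W false y + tp W true y) / 2.

Definition ch_equiv (W W' : channel R) : Prop :=
  forall e, 0 <= e <= 1 -> lr_profile W e = lr_profile W' e.

Definition degraded (W' W : channel R) : Prop :=
  exists T : out W -> out W' -> R,
    (forall y y', 0 <= T y y') /\ (forall y, \sum_y' T y y' = 1) /\
    (forall a y', tp W' a y' = \sum_y tp W a y * T y y').

Definition bsc (e : R) (x y : bool) : R := if x == y then 1 - e else e.

Definition prob_vec (n : nat) (p : 'I_n -> R) : Prop :=
  (forall i, 0 <= p i) /\ \sum_i p i = 1.

Definition bsc_mix (n : nat) (p e : 'I_n -> R) : channel R :=
  Channel ('I_n * bool)%type (fun x iy => p iy.1 * bsc (e iy.1) x iy.2).

Definition in_B (n : nat) (W : channel R) : Prop :=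
  exists (p e : 'I_n -> R), prob_vec p /\ (forall i, 0 <= e i <= 1) /\
    ch_equiv W (bsc_mix p e).

Definition Perr (W : channel R) : R :=
  (\sum_y Num.min (tp W false y) (tp W true y)) / 2.

Definition symmetric (Q : channel R) : Prop :=
  exists f : out Q -> out Q, (forall y, f (f y) = y) /\
    (forall y, tp Q false y = tp Q true (f y)).

Definition Pdeg (n : nat) (W Q : channel R) : Prop :=
  (0 < n)%N /\ valid Q /\ symmetric Q /\ valid W /\ in_B n W /\ degraded W Q /\
  (forall W', valid W' -> in_B n W' -> degraded W' Q -> Perr W <= Perr W').

Definition colsum (m n : nat) (k : 'I_m -> 'I_n -> R) (j : 'I_n) : R :=
  \sum_i k i j.

Definition Wmat (m n : nat) (sigma : 'I_m -> R) (k : 'I_m -> 'I_n -> R)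
  : channel R :=
  Channel ({j : 'I_n | 0 < colsum k j} * bool)%type
    (fun x jy => let j := val jy.1 in
       colsum k j * bsc ((colsum k j)^-1 * \sum_i k i j * sigma i) x jy.2).

Definition move_entry (m n : nat) (k : 'I_m -> 'I_n -> R) (i0 : 'I_m) (a b : 'I_n)
  : 'I_m -> 'I_n -> R :=
  fun i j => if (i == i0) && (j == a) then 0
             else if (i == i0) && (j == b) then k i0 b + k i0 a
             else k i j.

Definition swap_entries (m n : nat) (k : 'I_m -> 'I_n -> R) (d : R)
  (i1 i2 : 'I_m) (j1 j2 : 'I_n) : 'I_m -> 'I_n -> R :=
  fun i j => k i j
    - (if (i == i1) && (j == j2) then d else 0)
    - (if (i == i2) && (j == j1) then d else 0)
    + (if (i == i1) && (j == j1) then d else 0)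
    + (if (i == i2) && (j == j2) then d else 0).

End Defs.

(* Main.v *)
Require Import Defs.
From HB Require Import structures.
From mathcomp Require Import all_boot all_order all_algebra.
From mathcomp Require Import reals.
From mathcomp Require Import ring lra.
Import Order.TTheory GRing.Theory Num.Theory.
Local Open Scope ring_scope.
Set Implicit Arguments. Unset Strict Implicit. Unset Printing Implicit Defensive.

Section S.
Variable R : realType.
Implicit Types W : channel R.

Lemma sum_sig (I : finType) (P : pred I) (F : I -> R) :
  \sum_(x : {x | P x}) F (val x) = \sum_(i | P i) F i.
Proof.
rewrite (reindex_omap (val : {x | P x} -> I) insub).
  by apply: eq_bigl=> -[i iA]/=; rewrite insubT /= iA eqxx.
by move=> i Pi; rewrite insubT.
Qed.

Lemma Perr_deg W W' : degraded W' W -> Perr W <= Perr W'.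
Proof.
case=> T [T0 [T1 TW]]; rewrite /Perr ler_pM2r ?invr_gt0 ?ltr0n //.
have -> : \sum_y Num.min (tp W false y) (tp W true y) =
  \sum_y' \sum_y Num.min (tp W false y) (tp W true y) * T y y'.
  rewrite exchange_big /=; apply: eq_bigr => y _.
  by rewrite -mulr_sumr T1 mulr1.
apply: ler_sum => y' _; rewrite !TW le_min; apply/andP; split;
  apply: ler_sum => y _; apply: ler_wpM2r => //; by rewrite ge_min lexx ?orbT.
Qed.

Lemma deg_trans W1 W2 W3 : degraded W1 W2 -> degraded W2 W3 -> degraded W1 W3.
Proof.
case=> T21 [A0 [A1 AW]] [T32 [B0 [B1 BW]]].
exists (fun y3 y1 => \sum_y2 T32 y3 y2 * T21 y2 y1); split; [|split].
- by move=> y y'; apply: sumr_ge0 => i _; apply: mulr_ge0.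
- move=> y; rewrite exchange_big /= -(B1 y); apply: eq_bigr => y2 _.
  by rewrite -mulr_sumr A1 mulr1.
- move=> a y1; rewrite AW.
  under eq_bigr do rewrite BW mulr_suml.
  rewrite exchange_big /=; apply: eq_bigr => y3 _.
  by rewrite mulr_sumr; apply: eq_bigr => y2 _; rewrite mulrA.
Qed.
Lemma sum_pair (A B : finType) (F : A * B -> R) :
  \sum_y F y = \sum_a \sum_b F (a, b).
Proof. by rewrite pair_bigA; apply: eq_bigr => -[]. Qed.

Lemma assemble n (W W' Q : channel R) :
  Pdeg n W Q -> valid W' -> Defs.symmetric W' -> in_B n W' -> degraded W' Q ->
  degraded W W' -> Pdeg n W W' /\ Pdeg n W' Q.
Proof.
case=> [n0 [vQ [sQ [vW [bW [dWQ opt]]]]]] vW' sW' bW' dW'Q dWW'.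
split; do !split => //.
- by move=> W2 v2 b2 d2; apply: opt => //; apply: deg_trans d2 _.
- move=> W2 v2 b2 d2; apply: le_trans (opt _ v2 b2 d2).
  exact: Perr_deg.
Qed.

Lemma sumb1 (b : bool) (x : R) : \sum_b' (if b == b' then x else 0) = x.
Proof. by rewrite big_bool; case: b => /=; rewrite ?addr0 ?add0r. Qed.
Lemma sumb2 (b' a : bool) (c s x : R) :
  \sum_b (c * bsc s a b * (if b == b' then x else 0)) = c * bsc s a b' * x.
Proof. by rewrite big_bool; case: b' => /=; rewrite mulr0 ?addr0 ?add0r. Qed.



Lemma twocol' (A B P1 P2 al be e1 e2 : R) :
  0 < A -> 0 < B -> 0 < P1 -> 0 < P2 -> A + B = P1 + P2 ->
  A * al + B * be = P1 * e1 + P2 * e2 ->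
  al <= e1 -> al <= e2 -> e1 <= be -> e2 <= be ->
  exists F11 F12 F21 F22 : R, [/\ 0 <= F11, 0 <= F12, 0 <= F21, 0 <= F22 &
   [/\ F11 + F12 = A, F21 + F22 = B, F11 + F21 = P1, F12 + F22 = P2 &
    F11 * al + F21 * be = P1 * e1 /\ F12 * al + F22 * be = P2 * e2]].
Proof.
move=> A0 B0 P10 P20 hAB h2 a1 a2 b1 b2.
have [eab|nab] := eqVneq al be.
  have e1a : e1 = al by apply/le_anti; rewrite a1 eab b1.
  have e2a : e2 = al by apply/le_anti; rewrite a2 eab b2.
  have s0 : P1 + P2 != 0 by rewrite gt_eqF // addr_gt0.
  exists (A * P1 / (P1 + P2)), (A * P2 / (P1 + P2)), (B * P1 / (P1 + P2)), (B * P2 / (P1 + P2)).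
  have A0' := ltW A0; have B0' := ltW B0; have P10' := ltW P10; have P20' := ltW P20.
  split; [by rewrite divr_ge0 ?mulr_ge0 ?addr_ge0 ..|].
  have key x : A * x / (P1 + P2) + B * x / (P1 + P2) = x.
    by rewrite -mulrDl -mulrDl hAB mulrAC divff // mul1r.
  rewrite -eab e1a e2a; split; [field => // | field => // | exact: key | exact: key |].
  by split; rewrite -mulrDl key.
have d0 : 0 < be - al by rewrite subr_gt0 lt_def eq_sym nab (le_trans a1 b1).
have dnz : be - al != 0 by rewrite gt_eqF.
exists (P1 * (be - e1) / (be - al)), (P2 * (be - e2) / (be - al)),
       (P1 * (e1 - al) / (be - al)), (P2 * (e2 - al) / (be - al)).
have d0' := ltW d0; have P10' := ltW P10; have P20' := ltW P20.
split; [by rewrite divr_ge0 // mulr_ge0 // subr_ge0 ..|].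
have hB : B = P1 + P2 - A by rewrite -hAB; ring.
have p1nz : P1 != 0 by rewrite gt_eqF.
have he1 : e1 = (A * al + B * be - P2 * e2) / P1 by rewrite h2; field.
move: dnz; clear -hB he1 p1nz; subst B; subst e1 => dnz.
by split; try split; field; rewrite ?dnz ?p1nz.
Qed.

Lemma twocol (A B P1 P2 SA SB e1 e2 : R) :
  0 <= A -> 0 <= B -> 0 <= SA -> SA <= A -> 0 <= SB -> SB <= B ->
  0 < P1 -> 0 < P2 -> A + B = P1 + P2 -> SA + SB = P1 * e1 + P2 * e2 ->
  SA <= A * e1 -> SA <= A * e2 -> B * e1 <= SB -> B * e2 <= SB ->
  exists F11 F12 F21 F22 : R, [/\ 0 <= F11, 0 <= F12, 0 <= F21, 0 <= F22 &
   [/\ F11 + F12 = A, F21 + F22 = B, F11 + F21 = P1, F12 + F22 = P2 &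
    F11 * (A^-1 * SA) + F21 * (B^-1 * SB) = P1 * e1 /\
    F12 * (A^-1 * SA) + F22 * (B^-1 * SB) = P2 * e2]].
Proof.
move=> A0 B0 SA0 SA1 SB0 SB1 P10 P20 hAB hS a1 a2 b1 b2.
have [Az|Anz] := eqVneq A 0.
  have SAz : SA = 0 by apply/le_anti; rewrite SA0 -Az SA1.
  move: hAB hS a1 a2 b1 b2; rewrite Az SAz !add0r => hAB hS _ _ b1 b2.
  have e12 : e1 = e2.
    move: b1 b2; rewrite hAB hS => b1 b2.
    apply/le_anti; apply/andP; split; [rewrite -(ler_pM2l P20) | rewrite -(ler_pM2l P10)]; lra.
  have hSB : SB = B * e1 by rewrite hS hAB -e12; ring.
  have Bnz : B != 0 by rewrite hAB gt_eqF // addr_gt0.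
  exists 0, 0, P1, P2; split; [by []|by []|exact: ltW|exact: ltW|].
  rewrite hSB mulKf // -hAB -e12; by split; try split; ring.
have [Bz|Bnz] := eqVneq B 0.
  have SBz : SB = 0 by apply/le_anti; rewrite SB0 -Bz SB1.
  move: hAB hS a1 a2 b1 b2; rewrite Bz SBz !addr0 => hAB hS a1 a2 _ _.
  have e12 : e1 = e2.
    move: a1 a2; rewrite hAB hS => a1 a2.
    apply/le_anti; apply/andP; split; [rewrite -(ler_pM2l P10) | rewrite -(ler_pM2l P20)]; lra.
  have hSA : SA = A * e1 by rewrite hS hAB -e12; ring.
  exists P1, P2, 0, 0; split; [exact: ltW|exact: ltW|by []|by []|].
  rewrite hSA mulKf // -hAB -e12; by split; try split; ring.
have Ap : 0 < A by rewrite lt_def Anz A0.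
have Bp : 0 < B by rewrite lt_def Bnz B0.
apply: twocol' => //.
- by rewrite !mulrA !divff // !mul1r.
- by rewrite -(ler_pM2l Ap) mulrA divff // mul1r.
- by rewrite -(ler_pM2l Ap) mulrA divff // mul1r.
- by rewrite -(ler_pM2l Bp) mulrA divff // mul1r.
- by rewrite -(ler_pM2l Bp) mulrA divff // mul1r.
Qed.


Lemma sum_cond1 (I : finType) (P : pred I) (j : I) (x : I -> R) :
  \sum_(i | P i) (if i == j then x i else 0) = if P j then x j else 0.
Proof.
case Pj: (P j).
  rewrite (bigD1 j) //= eqxx big1 ?addr0 // => i /andP[_ /negbTE ->] //.
by apply: big1 => i Pi; case: eqP => // eij; move: Pi; rewrite eij Pj.
Qed.

Lemma sum1 (I : finType) (j : I) (x : R) :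
  \sum_i (if j == i then x else 0) = x.
Proof.
rewrite (bigD1 j) //= eqxx big1 ?addr0 // => i /negbTE; by rewrite eq_sym => ->.
Qed.

Lemma sum2 (I : finType) (a b : I) (x y : R) : a != b ->
  \sum_i (if i == a then x else if i == b then y else 0) = x + y.
Proof.
move=> ab; rewrite (bigD1 a) //= eqxx (bigD1 b) /=; last by rewrite eq_sym.
rewrite (negbTE (_ : b != a)) 1?eq_sym // eqxx big1 ?addr0 // => i /andP[/negbTE -> /negbTE ->] //.
Qed.

Lemma split3 (I : finType) (a b : I) (h : I -> R) : a != b ->
  \sum_i h i = h a + h b + \sum_(i | (i != a) && (i != b)) h i.
Proof.
move=> ab; rewrite (bigD1 a) //= (bigD1 b) /=; last by rewrite eq_sym.
by rewrite addrA; congr (_ + _); apply: eq_bigl => i; rewrite andbC.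
Qed.

Section Wm.
Variables (m n : nat) (sigma : 'I_m -> R) (k : 'I_m -> 'I_n -> R).
Hypothesis hs0 : forall i, 0 <= sigma i.
Hypothesis hs1 : forall i, sigma i <= 1 / 2.
Hypothesis hk0 : forall i j, 0 <= k i j.

Definition Sw j := \sum_i k i j * sigma i.

Lemma cs_ge0 j : 0 <= colsum k j.
Proof. by apply: sumr_ge0. Qed.

Lemma Sw_ge0 j : 0 <= Sw j.
Proof. by apply: sumr_ge0 => i _; apply: mulr_ge0. Qed.

Lemma Sw_le j : Sw j <= colsum k j / 2.
Proof.
rewrite /Sw /colsum mulr_suml; apply: ler_sum => i _.
by apply: ler_wpM2l => //; move: (hs1 i); rewrite mul1r.
Qed.

Lemma cs0_k j : colsum k j = 0 -> forall i, k i j = 0.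
Proof. by move/eqP; rewrite psumr_eq0 //= => /allP H i; apply/eqP/H; rewrite mem_index_enum. Qed.

Lemma cs0_S j : colsum k j = 0 -> Sw j = 0.
Proof. by move=> h; apply/eqP; rewrite eq_le Sw_ge0 andbT; have := Sw_le j; rewrite h mul0r. Qed.

Lemma tpW j x b :
  colsum k j * bsc ((colsum k j)^-1 * \sum_i k i j * sigma i) x b =
  if x == b then colsum k j - Sw j else Sw j.
Proof.
have [h|h] := eqVneq (colsum k j) 0.
  by rewrite h cs0_S // mul0r; case: ifP; rewrite ?subr0.
rewrite /bsc -/(Sw j); case: ifP => _; first by rewrite mulrBr mulr1 mulrA divff ?mul1r.
by rewrite mulrA divff ?mul1r.
Qed.

Lemma cr_bounds j : 0 <= (colsum k j)^-1 * Sw j <= 1.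
Proof.
have [h|h] := eqVneq (colsum k j) 0; first by rewrite h invr0 mul0r lexx ler01.
have hp : 0 < colsum k j by rewrite lt_def h cs_ge0.
rewrite mulr_ge0 ?invr_ge0 ?cs_ge0 ?Sw_ge0 //= ler_pdivrMl // mulr1.
apply: le_trans (Sw_le j) _; rewrite ler_pdivrMr // ler_peMr ?cs_ge0 //.
by rewrite (ler_nat R 1 2).
Qed.


Lemma sum_cs_sig (F : 'I_n -> R) : (forall j, colsum k j = 0 -> F j = 0) ->
  \sum_(js : {j : 'I_n | 0 < colsum k j}) F (val js) = \sum_j F j.
Proof.
move=> HF; rewrite sum_sig [RHS](bigID (fun j => 0 < colsum k j)) /=.
rewrite [X in _ = _ + X]big1 ?addr0 // => j; rewrite lt_def cs_ge0 andbT negbK.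
by move/eqP/HF.
Qed.

Lemma Wm_degF (p eps : 'I_n -> R) (F : 'I_n -> 'I_n -> R) :
  (forall i j, 0 <= F i j) -> (forall i, \sum_j F i j = colsum k i) ->
  (forall j, \sum_i F i j = p j) ->
  (forall j, \sum_i F i j * ((colsum k i)^-1 * Sw i) = p j * eps j) ->
  degraded (bsc_mix p eps) (Wmat sigma k).
Proof.
move=> F0 Frow Fcol Fw.
have F0r i : colsum k i = 0 -> forall j, F i j = 0.
  move=> h j; apply/eqP; move: (Frow i); rewrite h => /eqP; rewrite psumr_eq0 // => /allP; apply.
  by rewrite mem_index_enum.
exists (fun (y : {j : 'I_n | 0 < colsum k j} * bool) (y' : 'I_n * bool) =>
  if y.2 == y'.2 then F (val y.1) y'.1 / colsum k (val y.1) else 0).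
split; [|split].
- move=> [js b] [j b'] /=; case: ifP => // _; by rewrite divr_ge0 // cs_ge0.
- move=> [js b]; rewrite sum_pair /=.
  under eq_bigr do rewrite sumb1.
  rewrite -mulr_suml Frow divff //; have := valP js; rewrite lt_def => /andP[] //.
- move=> a [j b'] /=; rewrite sum_pair /=.
  under eq_bigr do rewrite sumb2.
  rewrite (eq_bigr (fun js : {j : 'I_n | 0 < colsum k j} =>
     bsc ((colsum k (val js))^-1 * Sw (val js)) a b' * F (val js) j)); last first.
    move=> js _; have : colsum k (val js) != 0.
      by have := valP js; rewrite lt_def => /andP[].
    move=> nz; rewrite /Sw /=; move: nz; set c := colsum _ _; set X := bsc _ a b' => nz. by field.
  rewrite (sum_cs_sig (F := fun i => bsc ((colsum k i)^-1 * Sw i) a b' * F i j)); last first.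
    by move=> i /F0r ->; rewrite mulr0.
  rewrite /bsc; case: ifP => _.
    rewrite mulrBr mulr1 -(Fw j) -(Fcol j) -sumrB; apply: eq_bigr => i _.
    by rewrite mulrBl mul1r mulrC.
  by rewrite -Fw; apply: eq_bigr => i _; rewrite mulrC.
Qed.

Lemma Sw_lecs j : Sw j <= colsum k j.
Proof.
apply: le_trans (Sw_le j) _; rewrite ler_pdivrMr // ler_peMr ?cs_ge0 //.
by rewrite (ler_nat R 1 2).
Qed.

Lemma master (p eps : 'I_n -> R) (a b : 'I_n) : a != b ->
  (forall j, 0 < p j) ->
  (forall j, j != a -> j != b -> colsum k j = p j /\ Sw j = p j * eps j) ->
  colsum k a + colsum k b = p a + p b ->
  Sw a + Sw b = p a * eps a + p b * eps b ->
  Sw a <= colsum k a * eps a -> Sw a <= colsum k a * eps b ->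
  colsum k b * eps a <= Sw b -> colsum k b * eps b <= Sw b ->
  degraded (bsc_mix p eps) (Wmat sigma k).
Proof.
move=> ab hp hoth hcs hS i1 i2 i3 i4.
have ba : b != a by rewrite eq_sym.
have [F11 [F12 [F21 [F22 [f11 f12 f21 f22 [r1 r2 c1 c2 [w1 w2]]]]]]] :=
  twocol (cs_ge0 a) (cs_ge0 b) (Sw_ge0 a) (Sw_lecs a) (Sw_ge0 b) (Sw_lecs b)
    (hp a) (hp b) hcs hS i1 i2 i3 i4.
pose F i j := if i == a then (if j == a then F11 else if j == b then F12 else 0)
   else if i == b then (if j == a then F21 else if j == b then F22 else 0)
   else if i == j then colsum k i else 0.
have hF j : \sum_(i | (i != a) && (i != b)) F i j =
    if (j != a) && (j != b) then colsum k j else 0.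
  rewrite -(sum_cond1 (fun i => (i != a) && (i != b)) j (fun i => colsum k i)); apply: eq_bigr => i /andP[ia ib].
  by rewrite /F (negbTE ia) (negbTE ib); case: eqP.
have hFw j : \sum_(i | (i != a) && (i != b)) F i j * ((colsum k i)^-1 * Sw i) =
    if (j != a) && (j != b) then colsum k j * ((colsum k j)^-1 * Sw j) else 0.
  rewrite -(sum_cond1 (fun i => (i != a) && (i != b)) j
     (fun i => colsum k i * ((colsum k i)^-1 * Sw i))); apply: eq_bigr => i /andP[ia ib].
  by rewrite /F (negbTE ia) (negbTE ib); case: eqP => [->|]; rewrite ?mul0r.
apply: (@Wm_degF p eps F).
- move=> i j; rewrite /F; repeat case: (_ == _); rewrite ?cs_ge0 //.
- move=> i; rewrite /F; have [->|ia] := eqVneq i a; first by rewrite /= sum2.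
  have [->|ib] := eqVneq i b; first by rewrite /= sum2.
  exact: sum1.
- move=> j; rewrite (split3 _ ab) hF /F.
  have [->|ja] := eqVneq j a; first by rewrite !eqxx ?(negbTE ba) ?(negbTE ab) /= addr0.
  have [->|jb] := eqVneq j b; first by rewrite !eqxx ?(negbTE ba) ?(negbTE ab) /= addr0.
  by rewrite !eqxx (negbTE ba) /= !add0r; case: (hoth j ja jb).
- move=> j; rewrite (split3 _ ab) hFw /F.
  have [->|ja] := eqVneq j a; first by rewrite !eqxx ?(negbTE ba) ?(negbTE ab) /= addr0.
  have [->|jb] := eqVneq j b; first by rewrite !eqxx ?(negbTE ba) ?(negbTE ab) /= addr0.
  rewrite !eqxx (negbTE ba) /= !mul0r !add0r.
  case: (hoth j ja jb) => -> ->; rewrite mulrA divff ?mul1r //.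
  by rewrite gt_eqF.
Qed.

Variable q : 'I_m -> R.
Hypothesis hq : prob_vec q.
Hypothesis hrow : forall i, \sum_j k i j = q i.

Lemma sum_cs : \sum_j colsum k j = 1.
Proof.
rewrite /colsum exchange_big /= -(proj2 hq); apply: eq_bigr => i _; exact: hrow.
Qed.

Lemma Wm_valid : valid (Wmat sigma k).
Proof.
split.
  move=> x [js b] /=; rewrite tpW; case: ifP => _; last exact: Sw_ge0.
  by rewrite subr_ge0; apply: le_trans (Sw_le _) _; rewrite ler_pdivrMr // ler_peMr ?cs_ge0 // (ler_nat R 1 2).
move=> x; rewrite sum_pair /= -sum_cs -(sum_cs_sig (F := fun j => colsum k j)) //.
apply: eq_bigr => js _; rewrite big_bool /= !tpW.
by case: x => /=; rewrite ?subrK // addrC subrK.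
Qed.

Lemma Wm_sym : Defs.symmetric (Wmat sigma k).
Proof.
exists (fun y => (y.1, ~~ y.2)); split; first by case=> js b /=; rewrite negbK.
by case=> js b /=; case: b.
Qed.

Lemma Wm_sum (g : R -> R -> R) : g 0 0 = 0 ->
  \sum_(y : out (Wmat sigma k)) g (tp (Wmat sigma k) false y) (tp (Wmat sigma k) true y) =
  \sum_(y : 'I_n * bool) g (colsum k y.1 * bsc ((colsum k y.1)^-1 * Sw y.1) false y.2)
                          (colsum k y.1 * bsc ((colsum k y.1)^-1 * Sw y.1) true y.2).
Proof.
move=> g0; rewrite sum_pair [RHS]sum_pair /=.
rewrite -(sum_cs_sig (F := fun j => \sum_b g (colsum k j * bsc ((colsum k j)^-1 * Sw j) false b)
                          (colsum k j * bsc ((colsum k j)^-1 * Sw j) true b))) //.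
by move=> j h; apply: big1 => b _; rewrite h !mul0r.
Qed.

Lemma Wm_inB : in_B n (Wmat sigma k).
Proof.
exists (fun j => colsum k j), (fun j => (colsum k j)^-1 * Sw j); split.
  by split; [exact: cs_ge0 | exact: sum_cs].
split; first by move=> j; exact: cr_bounds.
move=> e _; rewrite /lr_profile big_mkcond [RHS]big_mkcond.
rewrite (Wm_sum (g := fun a b => if a * (1 - e) == e * b then (a + b) / 2 else 0)) //.
by case: (_ == _); rewrite ?addr0 ?mul0r.
Qed.

Lemma Wm_degQ : degraded (Wmat sigma k) (bsc_mix q sigma).
Proof.
exists (fun (y : 'I_m * bool) (y' : {j : 'I_n | 0 < colsum k j} * bool) =>
  if y.2 == y'.2 then (if q y.1 == 0 then colsum k (val y'.1) else k y.1 (val y'.1) / q y.1) else 0).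
split; [|split].
- move=> [i b] [js b'] /=; case: ifP => // _; case: ifP => _; first exact: cs_ge0.
  by rewrite divr_ge0 // (proj1 hq).
- move=> [i b]; rewrite sum_pair /=.
  under eq_bigr do rewrite sumb1.
  case hqi: (q i == 0).
    by rewrite (sum_cs_sig (F := fun j => colsum k j)) // sum_cs.
  rewrite (sum_cs_sig (F := fun j => k i j / q i)); last by move=> j /cs0_k ->; rewrite mul0r.
  by rewrite -mulr_suml hrow divff // hqi.
- move=> a [js b'] /=; rewrite tpW sum_pair /=.
  under eq_bigr do rewrite sumb2.
  have -> : \sum_i q i * bsc (sigma i) a b' * (if q i == 0 then colsum k (val js) else k i (val js) / q i)
     = \sum_i k i (val js) * bsc (sigma i) a b'.
    apply: eq_bigr => i _; case: ifP => [/eqP h|h].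
      rewrite h !mul0r; suff -> : k i (val js) = 0 by rewrite mul0r.
      apply/eqP; move: (hrow i); rewrite h => /eqP; rewrite psumr_eq0 // => /allP; apply.
      by rewrite mem_index_enum.
    by rewrite mulrAC mulrCA divff ?h // mulr1 mulrC.
  rewrite /bsc; case: ifP => _; last by [].
  by rewrite /colsum /Sw -sumrB; apply: eq_bigr => i _; rewrite mulrBr mulr1.
Qed.


Lemma Wm_final (p eps : 'I_n -> R) (a b : 'I_n) :
  Pdeg n (bsc_mix p eps) (bsc_mix q sigma) -> a != b ->
  (forall j, 0 < p j) ->
  (forall j, j != a -> j != b -> colsum k j = p j /\ Sw j = p j * eps j) ->
  colsum k a + colsum k b = p a + p b ->
  Sw a + Sw b = p a * eps a + p b * eps b ->
  Sw a <= colsum k a * eps a -> Sw a <= colsum k a * eps b ->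
  colsum k b * eps a <= Sw b -> colsum k b * eps b <= Sw b ->
  Pdeg n (bsc_mix p eps) (Wmat sigma k) /\ Pdeg n (Wmat sigma k) (bsc_mix q sigma).
Proof using hs0 hs1 hk0 hq hrow.
move=> hP ab hp hoth hcs hS i1 i2 i3 i4.
apply: assemble => //.
- exact: Wm_valid.
- exact: Wm_sym.
- exact: Wm_inB.
- exact: Wm_degQ.
- exact: (master ab hp hoth hcs hS i1 i2 i3 i4).
Qed.

End Wm.
Lemma sumeq (I : finType) (b : I) (c : R) : \sum_j (if j == b then c else 0) = c.
Proof. by rewrite (bigD1 b) //= eqxx big1 ?addr0 // => j /negbTE ->. Qed.

Lemma sum1w (I : finType) (j : I) (x : R) (w : I -> R) :
  \sum_i (if i == j then x else 0) * w i = x * w j.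
Proof.
rewrite (bigD1 j) //= eqxx big1 ?addr0 // => i /negbTE ->; by rewrite mul0r.
Qed.

Section Delta.
Variables (m n : nat) (k k' : 'I_m -> 'I_n -> R) (i1 i2 : 'I_m) (g1 g2 : 'I_n -> R).
Hypothesis hform : forall i j,
  k' i j = k i j + (if i == i1 then g1 j else 0) + (if i == i2 then g2 j else 0).

Lemma delta_col (w : 'I_m -> R) j :
  \sum_i k' i j * w i = \sum_i k i j * w i + g1 j * w i1 + g2 j * w i2.
Proof.
under eq_bigr do rewrite hform !mulrDl.
by rewrite !big_split /= !sum1w.
Qed.

Lemma delta_cs j : colsum k' j = colsum k j + g1 j + g2 j.
Proof.
rewrite /colsum; under eq_bigr do rewrite hform.
rewrite !big_split /=; congr (_ + _ + _).
- by rewrite (bigD1 i1) //= eqxx big1 ?addr0 // => i /negbTE ->.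
- by rewrite (bigD1 i2) //= eqxx big1 ?addr0 // => i /negbTE ->.
Qed.

Lemma delta_row : \sum_j g1 j = 0 -> \sum_j g2 j = 0 ->
  forall i, \sum_j k' i j = \sum_j k i j.
Proof.
move=> s1 s2 i; under eq_bigr do rewrite hform.
rewrite !big_split /=.
have z (b : bool) (g : 'I_n -> R) : \sum_j g j = 0 -> \sum_j (if b then g j else 0) = 0.
  by case: b => // _; rewrite big1.
by rewrite z // z // !addr0.
Qed.
End Delta.

Lemma apply_final (m n : nat) (q sigma : 'I_m -> R) (p eps : 'I_n -> R)
  (k k' : 'I_m -> 'I_n -> R) (i1 i2 : 'I_m) (g1 g2 : 'I_n -> R) (a b : 'I_n) :
  prob_vec q -> (forall i, 0 <= sigma i) -> (forall i, sigma i <= 1 / 2) ->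
  (forall j, 0 < p j) ->
  Pdeg n (bsc_mix p eps) (bsc_mix q sigma) ->
  (forall i, \sum_j k i j = q i) ->
  (forall j, \sum_i k i j = p j) ->
  (forall j, \sum_i k i j * sigma i = p j * eps j) ->
  (forall i j, k' i j = k i j + (if i == i1 then g1 j else 0) + (if i == i2 then g2 j else 0)) ->
  (forall i j, 0 <= k' i j) ->
  \sum_j g1 j = 0 -> \sum_j g2 j = 0 -> a != b ->
  (forall j, j != a -> j != b -> g1 j = 0 /\ g2 j = 0) ->
  g1 a + g1 b = 0 -> g2 a + g2 b = 0 ->
  p a * eps a + g1 a * sigma i1 + g2 a * sigma i2 <= (p a + g1 a + g2 a) * eps a ->
  p a * eps a + g1 a * sigma i1 + g2 a * sigma i2 <= (p a + g1 a + g2 a) * eps b ->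
  (p b + g1 b + g2 b) * eps a <= p b * eps b + g1 b * sigma i1 + g2 b * sigma i2 ->
  (p b + g1 b + g2 b) * eps b <= p b * eps b + g1 b * sigma i1 + g2 b * sigma i2 ->
  Pdeg n (bsc_mix p eps) (Wmat sigma k') /\ Pdeg n (Wmat sigma k') (bsc_mix q sigma).
Proof.
move=> hq hs0 hs1 hp hP hrow hcol hkS hform hk0' s1 s2 ab hoth ga gb c1 c2 c3 c4.
have cs' j : colsum k' j = p j + g1 j + g2 j by rewrite (delta_cs hform) /colsum hcol.
have Sw' j : Sw sigma k' j = p j * eps j + g1 j * sigma i1 + g2 j * sigma i2.
  by rewrite /Sw (delta_col hform) hkS.
have hrow' i : \sum_j k' i j = q i by rewrite (delta_row hform s1 s2) hrow.
have gb1 : g1 b = - g1 a by apply/eqP; rewrite -addr_eq0 addrC ga.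
have gb2 : g2 b = - g2 a by apply/eqP; rewrite -addr_eq0 addrC gb.
apply: (Wm_final hs0 hs1 hk0' hq hrow' hP ab hp); rewrite ?cs' ?Sw' //.
- by move=> j ja jb; rewrite cs' Sw'; case: (hoth j ja jb) => -> ->; rewrite !mul0r !addr0.
- by rewrite gb1 gb2; ring.
- by rewrite gb1 gb2; ring.
Qed.

Lemma move_form (m n : nat) (k : 'I_m -> 'I_n -> R) (i0 : 'I_m) (a b : 'I_n) : a != b ->
  forall i j, move_entry k i0 a b i j = k i j +
    (if i == i0 then (fun j => (if j == b then k i0 a else 0) - (if j == a then k i0 a else 0)) j else 0)
    + (if i == i0 then (fun _ : 'I_n => (0 : R)) j else 0).
Proof.
move=> ab i j; rewrite /move_entry.
have [->|ni] := eqVneq i i0; last by rewrite /= !addr0.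
rewrite /= addr0; have [->|ja] := eqVneq j a.
  by rewrite (negbTE ab) sub0r addrN.
have [->|jb] := eqVneq j b; first by rewrite subr0 addrC.
by rewrite subrr addr0.
Qed.

Lemma move_ge0 (m n : nat) (k : 'I_m -> 'I_n -> R) (i0 : 'I_m) (a b : 'I_n) :
  (forall i j, 0 <= k i j) -> forall i j, 0 <= move_entry k i0 a b i j.
Proof.
move=> hk i j; rewrite /move_entry; case: ifP => _ //; case: ifP => _ //.
exact: addr_ge0.
Qed.

Lemma g_sum (I : finType) (a b : I) (c : R) :
  \sum_j ((if j == b then c else 0) - (if j == a then c else 0)) = 0.
Proof. by rewrite sumrB !sumeq subrr. Qed.

End S.

Unset Implicit Arguments.

Theorem lemma6 (R : realType) (m n : nat) (q sigma : 'I_m -> R)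
  (p eps : 'I_n -> R) (k : 'I_m -> 'I_n -> R) :
  (0 < m)%N -> (0 < n)%N ->
  prob_vec q ->
  (forall i, 0 <= sigma i) -> (forall i, sigma i <= 1 / 2) ->
  (forall i1 i2 : 'I_m, (i1 < i2)%N -> sigma i1 < sigma i2) ->
  prob_vec p -> (forall j, 0 < p j) -> (forall j, 0 <= eps j <= 1) ->
  Pdeg n (bsc_mix p eps) (bsc_mix q sigma) ->
  (forall (i : 'I_m) (j : 'I_n), val i = 0%N -> val j = 0%N -> sigma i <= eps j) ->
  (forall j1 j2 : 'I_n, (j1 <= j2)%N -> eps j1 <= eps j2) ->
  (forall (i : 'I_m) (j : 'I_n), val i = m.-1 -> val j = n.-1 -> eps j <= sigma i) ->
  (* (k_ij) is a 1-matrix of pattern (q;p) *)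
  (forall i j, 0 <= k i j) ->
  (forall i, \sum_j k i j = q i) ->
  (forall j, \sum_i k i j = p j) ->
  (forall j, \sum_i k i j * sigma i = p j * eps j) ->
  let W := bsc_mix p eps in
  let Q := bsc_mix q sigma in
  [/\
   (* part 1 *)
   (forall (i' : 'I_m) (j' j1 : 'I_n), val j1 = (val j').+1 ->
      k i' j' != 0 -> eps j1 <= sigma i' ->
      let W' := Wmat sigma (move_entry k i' j' j1) in
      Pdeg n W W' /\ Pdeg n W' Q),
   (* part 2 *)
   (forall (i'' : 'I_m) (j'' j0 : 'I_n), val j'' = (val j0).+1 ->
      k i'' j'' != 0 -> sigma i'' <= eps j0 ->
      let W'' := Wmat sigma (move_entry k i'' j'' j0) in
      Pdeg n W W'' /\ Pdeg n W'' Q) &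
   (* part 3 *)
   (forall (ilo ihi : 'I_m) (jlo jhi : 'I_n),
      k ilo jhi * k ihi jlo != 0 ->
      eps jlo <= sigma ilo -> sigma ilo < sigma ihi -> sigma ihi <= eps jhi ->
      let d := Num.min (k ilo jhi) (k ihi jlo) in
      let Ws := Wmat sigma (swap_entries k d ilo ihi jlo jhi) in
      Pdeg n W Ws /\ Pdeg n Ws Q)].
Proof.
move=> m0 n0 hq hs0 hs1 hsinc hp hp0 heps hP hfirst hmono hlast hk0 hrow hcol hkS W Q.
have pge j : 0 <= p j := ltW (hp0 j).
have z0 : \sum_(j : 'I_n) (fun _ => (0 : R)) j = 0 by rewrite big1.
split.
- move=> i' j' j1 hj1 _ hle W'.
  have hlt : (val j' < val j1)%N by rewrite hj1.
  have ab : j' != j1 by apply/eqP => e; move: hlt; rewrite e ltnn.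
  have ba : j1 != j' by rewrite eq_sym.
  have hmo : eps j' <= eps j1 by apply: hmono; exact: ltnW.
  have c0 : 0 <= k i' j' := hk0 _ _.
  have := apply_final hq hs0 hs1 hp0 hP hrow hcol hkS (move_form k i' ab)
    (move_ge0 i' j' j1 hk0) (g_sum _ _ _) z0 ab.
  have H1 : 0 <= p j' * (eps j1 - eps j') by rewrite mulr_ge0 ?subr_ge0.
  have H2 : 0 <= p j1 * (eps j1 - eps j') by rewrite mulr_ge0 ?subr_ge0.
  have H3 : 0 <= k i' j' * (sigma i' - eps j1) by rewrite mulr_ge0 ?subr_ge0.
  have H4 : 0 <= k i' j' * (sigma i' - eps j') by rewrite mulr_ge0 ?subr_ge0 // (le_trans hmo hle).
  apply => /=.
  + by move=> j ja jb; rewrite (negbTE ja) (negbTE jb) subrr.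
  + rewrite !eqxx (negbTE ab) (negbTE ba) /=; ring.
  + by rewrite addr0.
  + rewrite !eqxx (negbTE ab) /=; nra.
  + rewrite !eqxx (negbTE ab) /=; nra.
  + rewrite !eqxx (negbTE ba) /=; nra.
  + rewrite !eqxx (negbTE ba) /=; nra.
- move=> i'' j'' j0 hj _ hle W''.
  have hlt : (val j0 < val j'')%N by rewrite hj.
  have ab : j0 != j'' by apply/eqP => e; move: hlt; rewrite e ltnn.
  have ba : j'' != j0 by rewrite eq_sym.
  have hmo : eps j0 <= eps j'' by apply: hmono; exact: ltnW.
  have c0 : 0 <= k i'' j'' := hk0 _ _.
  have := apply_final hq hs0 hs1 hp0 hP hrow hcol hkS (move_form k i'' ba)
    (move_ge0 i'' j'' j0 hk0) (g_sum _ _ _) z0 ab.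
  have H1 : 0 <= p j0 * (eps j'' - eps j0) by rewrite mulr_ge0 ?subr_ge0.
  have H2 : 0 <= p j'' * (eps j'' - eps j0) by rewrite mulr_ge0 ?subr_ge0.
  have H3 : 0 <= k i'' j'' * (eps j0 - sigma i'') by rewrite mulr_ge0 ?subr_ge0.
  have H4 : 0 <= k i'' j'' * (eps j'' - sigma i'') by rewrite mulr_ge0 ?subr_ge0 // (le_trans hle hmo).
  apply => /=.
  + by move=> j ja jb; rewrite (negbTE ja) (negbTE jb) subrr.
  + rewrite !eqxx (negbTE ab) (negbTE ba) /=; ring.
  + by rewrite addr0.
  + rewrite !eqxx (negbTE ab) /=; nra.
  + rewrite !eqxx (negbTE ab) /=; nra.
  + rewrite !eqxx (negbTE ba) /=; nra.
  + rewrite !eqxx (negbTE ba) /=; nra.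
- move=> ilo ihi jlo jhi _ h1 h2 h3 d Ws.
  have iab : ilo != ihi by apply/eqP => e; move: h2; rewrite e ltxx.
  have jab : jlo != jhi by apply/eqP => e; move: h3; rewrite -e => h3; move: (le_lt_trans h1 h2); rewrite ltNge h3.
  have jba : jhi != jlo by rewrite eq_sym.
  have iba : ihi != ilo by rewrite eq_sym.
  have d0 : 0 <= d by rewrite /d le_min !hk0.
  have d1 : d <= k ilo jhi by rewrite /d ge_min lexx.
  have d2 : d <= k ihi jlo by rewrite /d ge_min lexx orbT.
  have hform i j : swap_entries k d ilo ihi jlo jhi i j = k i j +
      (if i == ilo then (fun j => (if j == jlo then d else 0) - (if j == jhi then d else 0)) j else 0) +
      (if i == ihi then (fun j => (if j == jhi then d else 0) - (if j == jlo then d else 0)) j else 0).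
    rewrite /swap_entries /=.
    by case: (i == ilo); case: (i == ihi); case: (j == jlo); case: (j == jhi); rewrite /=; ring.
  have hk' i j : 0 <= swap_entries k d ilo ihi jlo jhi i j.
    rewrite hform /=.
    have [->|n1] := eqVneq i ilo.
      rewrite (negbTE iab) addr0.
      have [->|n2] := eqVneq j jhi; first by rewrite (negbTE jba) sub0r subr_ge0.
      rewrite subr0; case: (_ == _); rewrite ?addr0 ?addr_ge0 //.
    have [->|n3] := eqVneq i ihi.
      rewrite addr0.
      have [->|n2] := eqVneq j jlo; first by rewrite (negbTE jab) sub0r subr_ge0.
      rewrite subr0; case: (_ == _); rewrite ?addr0 ?addr_ge0 //.
    by rewrite !addr0.
  have hmo : eps jlo <= eps jhi by apply: le_trans h1 (le_trans (ltW h2) h3).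
  have := apply_final hq hs0 hs1 hp0 hP hrow hcol hkS hform hk'
    (g_sum _ _ _) (g_sum _ _ _) jab.
  have H1 : 0 <= p jlo * (eps jhi - eps jlo) by rewrite mulr_ge0 ?subr_ge0.
  have H2 : 0 <= p jhi * (eps jhi - eps jlo) by rewrite mulr_ge0 ?subr_ge0.
  have H3 : 0 <= d * (sigma ihi - sigma ilo) by rewrite mulr_ge0 ?subr_ge0 // ltW.
  apply => /=.
  + by move=> j ja jb; rewrite (negbTE ja) (negbTE jb) !subrr.
  + rewrite !eqxx (negbTE jab) (negbTE jba) /=; ring.
  + rewrite !eqxx (negbTE jab) (negbTE jba) /=; ring.
  + rewrite !eqxx (negbTE jab) /=; nra.
  + rewrite !eqxx (negbTE jab) /=; nra.
  + rewrite !eqxx (negbTE jba) /=; nra.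
  + rewrite !eqxx (negbTE jba) /=; nra.
Qed.
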